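(* Let $\phi:M_2\to M_2$ be a linear map with $\sigma_{\mathcal{K}}(\phi(A))=\sigma_{\mathcal{K}}(A)$ for all $A\in M_2$. Then $\phi(E_{11}+E_{21})$ is singular.
   Context: $M_2$ is the space of real $2\times2$ matrices and $E_{ij}$ is the matrix with $1$ in position $(i,j)$ and $0$ elsewhere. Lorentz cone $\mathcal{K}=\{(x_1,x_2)^T:|x_1|\le x_2\}$; a real $\lambda$ is an L-eigenvalue of $A$ if there is a nonzero $x\in\mathcal{K}$ with $(A-\lambda I)x\in\mathcal{K}$ and $x^T(A-\lambda I)x=0$; $\sigma_{\mathcal{K}}(A)$ is the set of L-eigenvalues. *)

(* Defs.v *)
From mathcomp Require Import all_boot all_order all_algebra.
From mathcomp Require Import reals.
Set Implicit Arguments. Unset Strict Implicit. Unset Printing Implicit Defensive.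
Import Order.TTheory GRing.Theory Num.Theory.
Local Open Scope ring_scope.

Definition lorentz_cone {R : realType} (x : 'cV[R]_2) : Prop :=
  `|x ord0 ord0| <= x (inord 1) ord0.

Definition L_eigenvalue {R : realType} (A : 'M[R]_2) (lam : R) : Prop :=
  exists x : 'cV[R]_2, x != 0 /\ lorentz_cone x /\
    lorentz_cone ((A - lam%:M) *m x) /\ (x^T *m (A - lam%:M) *m x) = 0.

Definition L_spectrum {R : realType} (A : 'M[R]_2) : R -> Prop :=
  fun lam => L_eigenvalue A lam.

(* E_ij, 0-based indices *)
Definition Eij {R : realType} (i j : 'I_2) : 'M[R]_2 := delta_mx i j.

(* Main.v *)
Require Import Defs.
From mathcomp Require Import all_boot all_order all_algebra.
From mathcomp Require Import reals.
From mathcomp Require Import lra ring.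
Import Order.TTheory GRing.Theory Num.Theory.
Local Open Scope ring_scope.

Section S.
Variable R : realType.

Let i1 : 'I_2 := inord 1.

Lemma sum2 (f : 'I_2 -> R) : \sum_i f i = f ord0 + f i1.
Proof.
rewrite big_ord_recl big_ord1; congr (_ + f _); apply/val_inj; by rewrite /= inordK.
Qed.

Lemma i1ne0 : (i1 == ord0) = false.
Proof. by apply/negbTE; rewrite -val_eqE /= inordK. Qed.

Lemma ord2P (i : 'I_2) : i = ord0 \/ i = i1.
Proof.
case: i => [[|[|n]]] Hi; [left|right|by []]; apply/val_inj => //=; by rewrite inordK.
Qed.

Lemma ord1P (i : 'I_1) : i = ord0.
Proof. by case: i => [[|n]] Hi //; apply/val_inj. Qed.

Lemma scalar_entries (lam : R) :
  (lam%:M : 'M[R]_2) ord0 ord0 = lam /\ (lam%:M : 'M[R]_2) ord0 i1 = 0 /\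
  (lam%:M : 'M[R]_2) i1 ord0 = 0 /\ (lam%:M : 'M[R]_2) i1 i1 = lam.
Proof. by rewrite !mxE eqxx i1ne0 eq_sym i1ne0 /= eqxx. Qed.

Lemma eig_scalar (B : 'M[R]_2) lam :
  L_eigenvalue B lam <->
  exists x1 x2 : R, (x1 != 0 \/ x2 != 0) /\ `|x1| <= x2 /\
   let y1 := (B ord0 ord0 - lam) * x1 + B ord0 i1 * x2 in
   let y2 := B i1 ord0 * x1 + (B i1 i1 - lam) * x2 in
   `|y1| <= y2 /\ x1 * y1 + x2 * y2 = 0.
Proof.
have [S00 [S01 [S10 S11]]] := scalar_entries lam.
have E1 : forall x : 'cV[R]_2, ((B - lam%:M) *m x) ord0 ord0 =
   (B ord0 ord0 - lam) * x ord0 ord0 + B ord0 i1 * x i1 ord0.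
  by move=> x; rewrite mxE sum2 !mxE eqxx [ord0 == i1]eq_sym i1ne0 mulr1n mulr0n subr0.
have E2 : forall x : 'cV[R]_2, ((B - lam%:M) *m x) i1 ord0 =
   B i1 ord0 * x ord0 ord0 + (B i1 i1 - lam) * x i1 ord0.
  by move=> x; rewrite mxE sum2 !mxE eqxx i1ne0 mulr1n mulr0n subr0.
have E3 : forall x : 'cV[R]_2, (x^T *m (B - lam%:M) *m x) ord0 ord0 =
   x ord0 ord0 * ((B - lam%:M) *m x) ord0 ord0 + x i1 ord0 * ((B - lam%:M) *m x) i1 ord0.
  by move=> x; rewrite -mulmxA mxE sum2 !mxE.
split.
- case=> x [xn0 [Kx [Ky Q]]].
  exists (x ord0 ord0), (x i1 ord0); split.
    case: (eqVneq (x ord0 ord0) 0) => h0; last by left.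
    case: (eqVneq (x i1 ord0) 0) => h1; last by right.
    exfalso; move/eqP: xn0; apply; apply/matrixP => i j; rewrite (ord1P j) mxE.
    by case: (ord2P i) => ->.
  split; first exact: Kx.
  rewrite /= -E1 -E2 -E3 Q; split; [exact: Ky | by rewrite ?mxE].
- case=> x1 [x2 [xn0 [Kx [Ky Q]]]].
  exists (\col_(i < 2) (if i == ord0 then x1 else x2) : 'cV[R]_2).
  have c0 : (\col_(i < 2) (if i == ord0 then x1 else x2) : 'cV[R]_2) ord0 ord0 = x1 by rewrite mxE eqxx.
  have c1 : (\col_(i < 2) (if i == ord0 then x1 else x2) : 'cV[R]_2) i1 ord0 = x2 by rewrite mxE i1ne0.
  split.
    apply/negP => /eqP h; move: c0 c1; rewrite h !mxE => e0 e1; by case: xn0; rewrite -?e0 -?e1 eqxx.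
  split; first by rewrite /lorentz_cone -/i1 c0 c1.
  split; first by rewrite /lorentz_cone -/i1 E1 E2 c0 c1.
  apply/matrixP => i j; rewrite (ord1P i) (ord1P j) E3 E1 E2 c0 c1 mxE; exact: Q.
Qed.

Lemma scal (p q r s lam x1 x2 : R) :
  (x1 != 0 \/ x2 != 0) -> `|x1| <= x2 ->
  `|(p - lam) * x1 + q * x2| <= r * x1 + (s - lam) * x2 ->
  x1 * ((p - lam) * x1 + q * x2) + x2 * (r * x1 + (s - lam) * x2) = 0 ->
  (p - lam) * (s - lam) - q * r = 0 \/
  (2 * lam = p + q + r + s /\ 0 <= r + s - p - q) \/
  (2 * lam = p - q - r + s /\ 0 <= - p + q - r + s).
Proof.
set y1 := (p - lam) * x1 + q * x2; set y2 := r * x1 + (s - lam) * x2.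
move=> nz Hx /ler_normlP [hy1' hy2'] Q; move: (Hx) => /ler_normlP [hx1 hx2].
move: hy1' hy2' => hy1 hy2.
have x2p : 0 < x2.
  case: nz => h.
    have h' : 0 < `|x1| by rewrite normr_gt0.
    exact: lt_le_trans h' Hx.
  by rewrite lt_neqAle eq_sym h /=; lra.
have Q' := Q.
have P1 : ((p - lam) * (s - lam) - q * r) * x2 = (p - lam) * y2 - r * y1.
  rewrite /y1 /y2; ring.
have PA : y1 + y2 = (p + q + r + s - 2 * lam) * x2 + (p - lam + r) * (x1 - x2).
  rewrite /y1 /y2; ring.
have PB : y2 - y1 = (r + s - p - q) * x2 + (r - p + lam) * (x1 - x2).
  rewrite /y1 /y2; ring.
have PC : y2 - y1 = (p - q - r + s - 2 * lam) * x2 + (r - p + lam) * (x1 + x2).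
  rewrite /y1 /y2; ring.
have PD : y2 + y1 = (- p + q - r + s) * x2 + (p - lam + r) * (x1 + x2).
  rewrite /y1 /y2; ring.
clearbody y1 y2.
have x2n : x2 != 0 by exact: lt0r_neq0.
have [e|ne] := eqVneq x1 x2.
  right; left.
  rewrite e subrr mulr0 addr0 in PA; rewrite e subrr mulr0 addr0 in PB.
  have e1 : y1 + y2 = 0.
    apply: (mulIf x2n); rewrite mul0r -Q -e; ring.
  split.
    move: e1; rewrite PA => /eqP; rewrite mulf_eq0 (negbTE x2n) orbF => /eqP; lra.
  by rewrite -(pmulr_lge0 _ x2p) -PB; lra.
have [e|ne'] := eqVneq x1 (- x2).
  right; right.
  rewrite e addNr mulr0 addr0 in PC; rewrite e addNr mulr0 addr0 in PD.
  have e1 : y2 - y1 = 0.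
    apply: (mulIf x2n); rewrite mul0r -Q e; ring.
  split.
    move: e1; rewrite PC => /eqP; rewrite mulf_eq0 (negbTE x2n) orbF => /eqP; lra.
  by rewrite -(pmulr_lge0 _ x2p) -PD; lra.
left.
have a1 : x1 < x2 by rewrite lt_neqAle ne hx2.
have a2 : - x2 < x1.
  have a3 : - x2 <= x1 by lra.
  rewrite lt_neqAle a3 andbT; apply: contra_neq ne' => h; by rewrite -h.
have g1 : 0 <= (x2 - x1) * (y2 - y1) by apply: mulr_ge0; lra.
have g2 : 0 <= (x2 + x1) * (y2 + y1) by apply: mulr_ge0; lra.
have sm : (x2 - x1) * (y2 - y1) + (x2 + x1) * (y2 + y1) = 2 * (x1 * y1 + x2 * y2) by ring.
rewrite Q mulr0 in sm.
have z1 : (x2 - x1) * (y2 - y1) = 0 by lra.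
have z2 : (x2 + x1) * (y2 + y1) = 0 by lra.
have w1 : y2 - y1 = 0.
  by move/eqP: z1; rewrite mulf_eq0 => /orP [/eqP hh|/eqP //]; lra.
have w2 : y2 + y1 = 0.
  by move/eqP: z2; rewrite mulf_eq0 => /orP [/eqP hh|/eqP //]; lra.
have Y1 : y1 = 0 by lra.
have Y2 : y2 = 0 by lra.
move: P1; rewrite Y1 Y2 !mulr0 subr0 => /eqP; rewrite mulf_eq0 (negbTE x2n) orbF => /eqP //.
Qed.
Lemma det2 (B : 'M[R]_2) : \det B = B ord0 ord0 * B i1 i1 - B ord0 i1 * B i1 ord0.
Proof.
rewrite (expand_det_row _ ord0) sum2 /cofactor !det_mx11 !mxE.
have l0 : lift ord0 (0 : 'I_1) = i1 by apply/val_inj; rewrite /= inordK.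
have l1 : lift i1 (0 : 'I_1) = ord0 by apply/val_inj; rewrite /= /bump /= inordK.
have v1 : nat_of_ord i1 = 1%N by rewrite /= inordK.
rewrite l0 l1 v1 /= expr0 expr1 !mul1r mulN1r; ring.
Qed.
End S.

Theorem lemma4p2 (R : realType) (phi : {linear 'M[R]_2 -> 'M[R]_2})
  (Hphi : forall A : 'M[R]_2, forall lam : R, L_spectrum (phi A) lam <-> L_spectrum A lam) :
  \det (phi (Eij ord0 ord0 + Eij (inord 1) ord0)) = 0.
Proof.
set A := Eij ord0 ord0 + Eij (inord 1) ord0.
have i1ne0' : ((inord 1 : 'I_2) == ord0) = false by exact: i1ne0.
have eA : forall i j, A i j = (j == ord0)%:R.
  move=> i j; rewrite /A /Eij !mxE.
  case: (ord2P i) => ->; case: (ord2P j) => ->; rewrite ?eqxx ?i1ne0' ?(eq_sym ord0 (inord 1)) ?i1ne0' /= ?addr0 ?add0r ?mulr0n //.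
have A00 : A ord0 ord0 = 1 by rewrite eA eqxx.
have A10 : A (inord 1) ord0 = 1 by rewrite eA eqxx.
have A01 : A ord0 (inord 1) = 0 by rewrite eA i1ne0'.
have A11 : A (inord 1) (inord 1) = 0 by rewrite eA i1ne0'.
have EA0 : L_spectrum A 0.
  apply/eig_scalar; exists 0, 1; rewrite A00 A10 A01 A11 /=.
  split; first by right; rewrite oner_eq0.
  rewrite normr0; split; first exact: ler01.
  by rewrite !(mulr0, mul0r, subr0, addr0, mulr1) normr0.
have EA1 : L_spectrum A 1.
  apply/eig_scalar; exists 1, 1; rewrite A00 A10 A01 A11 /=.
  split; first by right; rewrite oner_eq0.
  rewrite normr1; split; first by [].
  have -> : (1 - 1) * 1 + 0 * 1 = 0 :> R by ring.
  have -> : 1 * 1 + (0 - 1) * 1 = 0 :> R by ring.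
  by rewrite normr0 mulr0 addr0.
have EAm : L_spectrum (- A) 0.
  apply/eig_scalar; exists 0, 1; rewrite ![(- A) _ _]mxE A00 A10 A01 A11 /=.
  split; first by right; rewrite oner_eq0.
  rewrite normr0; split; first exact: ler01.
  by rewrite !(mulr0, mul0r, subr0, addr0, mulr1, oppr0) normr0.
move/Hphi: EA0 => /eig_scalar [a1 [a2 [n1 [k1 [k2 k3]]]]].
move/Hphi: EA1 => /eig_scalar [b1 [b2 [m1 [l1 [l2 l3]]]]].
move/Hphi: EAm; rewrite linearN => /eig_scalar [c1 [c2 [o1 [j1 [j2 j3]]]]].
move: k2 k3 l2 l3 j2 j3; rewrite !mxE => k2 k3 l2 l3 j2 j3.
have H0 := @scal _ _ _ _ _ _ _ _ n1 k1 k2 k3.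
have H1 := @scal _ _ _ _ _ _ _ _ m1 l1 l2 l3.
have Hm := @scal _ _ _ _ _ _ _ _ o1 j1 j2 j3.
clear k1 k2 k3 l1 l2 l3 j1 j2 j3 n1 m1 o1 eA A00 A01 A10 A11 Hphi.
rewrite det2.
move: H0 H1 Hm.
set p := phi A ord0 ord0; set q := phi A ord0 _; set r := phi A _ ord0; set s := phi A _ _.
move=> H0 H1 Hm.
move: H0 H1 Hm; rewrite !subr0 !mulr0 !opprK !mulrNN.
case=> [//|[[a b]|[a b]]] H1; case=> [//|[[e f]|[e f]]].
- have -> : s = - r by lra. have -> : q = - p by lra. ring.
- have es : s = - p by lra. have er : r = - q by lra.
  rewrite es er in H1 *.
  have g : 0 <= (p - q) * (- (p + q)) by apply: mulr_ge0; lra.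
  case: H1 => [h|[[c d]|[c d]]]; [|lra|lra].
  have ee : (p - 1) * (- p - 1) - q * - q = 1 + (p - q) * (- (p + q)) by ring.
  lra.
- have es : s = - p by lra. have er : r = - q by lra.
  rewrite es er in H1 *.
  have g : 0 <= (q - p) * (p + q) by apply: mulr_ge0; lra.
  case: H1 => [h|[[c d]|[c d]]]; [|lra|lra].
  have ee : (p - 1) * (- p - 1) - q * - q = 1 + (q - p) * (p + q) by ring.
  lra.
- have -> : s = r by lra. have -> : q = p by lra. ring.
Qed.
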